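(* Let $d,s\ge1$ be integers and let $f$ be a real-valued trigonometric polynomial on $[0,1]^d$ with $\hat f(\omega)=0$ whenever $\|\omega\|_\infty>2s$, with minimal value $f_\ast$. Suppose $g=\sum_{j=1}^N|q_j|^2$ for finitely many trigonometric polynomials $q_j$ of degree at most $s$, and $\|f-f_\ast-g\|_{\rm F}\le\varepsilon'$. Then \[ 0\le f_\ast-c_\ast(f,s)\le(2s+1)^d\varepsilon'. \]
   Context: Fourier coefficients $\hat f(\omega)=\int_{[0,1]^d}f(x)e^{-2i\pi\omega^\top x}dx$; F-norm $\|h\|_{\rm F}=\sum_{\omega\in\mathbb Z^d}|\hat h(\omega)|$. A trigonometric polynomial of degree at most $s$ is $q(x)=\sum_{\omega\in\mathbb Z^d,\|\omega\|_\infty\le s}a_\omega e^{2i\pi\omega^\top x}$ with $a_\omega\in\mathbb C$. $c_\ast(f,s)$ is the supremum of $c\in\mathbb R$ such that $f-c=\sum_{j}|q_j|^2$ for finitely many trigonometric polynomials $q_j$ of degree at most $s$. *)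

(* Defs.v *)
From Stdlib Require Import Rdefinitions Rtrigo_def Rtrigo1.
From mathcomp Require Import all_boot all_order all_algebra.
From mathcomp Require Import complex.
From mathcomp Require Import boolp classical_sets reals Rstruct.

Set Implicit Arguments.
Unset Strict Implicit.
Unset Printing Implicit Defensive.

Import Order.TTheory GRing.Theory Num.Theory.
Local Open Scope ring_scope.

Definition RR : realType := Rdefinitions.R.
Definition CC := complex RR.

Definition pt (d : nat) := 'I_d -> RR.

Definition cube (d : nat) (x : pt d) : Prop := forall i, 0 <= x i <= 1.

(* frequency index set {omega in Z^d : ||omega||_oo <= s}, encoded by
   k : 'I_d -> 'I_(2s+1) via omega_i = k_i - s *)
Definition freq (d s : nat) := {ffun 'I_d -> 'I_(s.*2.+1)}.
Definition omega_of (d s : nat) (k : freq d s) : 'I_d -> int :=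
  fun i => (nat_of_ord (k i))%:Z - s%:Z.

Definition ephase (d : nat) (w : 'I_d -> int) (x : pt d) : CC :=
  let t : RR := 2 * Rtrigo1.PI * \sum_(i < d) (w i)%:~R * x i in
  (Rtrigo_def.cos t +i* Rtrigo_def.sin t)%C.

Definition trig_sum (d s : nat) (a : freq d s -> CC) (x : pt d) : CC :=
  \sum_(k : freq d s) a k * ephase (omega_of k) x.

Definition is_trigpoly (d s : nat) (q : pt d -> CC) : Prop :=
  exists a : freq d s -> CC, forall x, q x = trig_sum a x.

Definition is_sos (d s : nat) (h : pt d -> RR) : Prop :=
  exists (N : nat) (q : 'I_N -> pt d -> CC),
    (forall j, is_trigpoly s (q j)) /\
    (forall x, cube x -> (h x)%:C%C = \sum_(j < N) `|q j x| ^+ 2).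

(* ||h||_F <= eps : the Fourier coefficients of the trigonometric polynomial h
   (on [0,1]^d) are its coefficients a_omega, and ||h||_F = sum_omega |a_omega|. *)
Definition Fnorm_le (d : nat) (h : pt d -> RR) (eps : RR) : Prop :=
  exists (n : nat) (a : freq d n -> CC),
    (forall x, cube x -> (h x)%:C%C = trig_sum a x) /\
    \sum_(k : freq d n) `|a k| <= eps%:C%C.

Definition c_star (d s : nat) (f : pt d -> RR) : RR :=
  sup [set c : RR | is_sos s (fun x => f x - c)]%classic.

(* Main.v *)
Require Import Defs.
From Stdlib Require Import Rdefinitions Rtrigo_def Rtrigo1 Rbase.
From mathcomp Require Import all_boot all_order all_algebra.
From mathcomp Require Import complex.
From mathcomp Require Import boolp classical_sets reals Rstruct.
From mathcomp Require Import ring lra zify.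
Import Order.TTheory GRing.Theory Num.Theory.
Local Open Scope ring_scope.

Definition E (y : RR) : CC :=
  let t : RR := 2 * Rtrigo1.PI * y in
  (Rtrigo_def.cos t +i* Rtrigo_def.sin t)%C.

Lemma ephaseE d (w : 'I_d -> int) x : ephase w x = E (\sum_(i < d) (w i)%:~R * x i).
Proof. by []. Qed.

Lemma E_add a b : E (a + b) = E a * E b.
Proof.
rewrite /E mulrDr.
have -> := cos_plus (2 * PI * a : RR) (2 * PI * b).
have -> := sin_plus (2 * PI * a : RR) (2 * PI * b).
rewrite -[(_ +i* _)%C * (_ +i* _)%C]/(_ +i* _)%C.
by congr (_ +i* _)%C; rewrite addrC.
Qed.

Lemma E0 : E 0 = 1.
Proof. by rewrite /E mulr0 cos_0 sin_0. Qed.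

Lemma E_opp a : E (- a) = (E a)^*%C.
Proof. by rewrite /E mulrN -RoppE cos_neg sin_neg. Qed.

Lemma E_conj a : E a * (E a)^*%C = 1.
Proof. by rewrite -E_opp -E_add subrr E0. Qed.

Lemma E_nat (k : nat) a : E (k%:R * a) = E a ^+ k.
Proof.
elim: k => [|k IH]; first by rewrite mul0r E0 expr0.
by rewrite -addn1 natrD mulrDl mul1r E_add IH exprD expr1.
Qed.


Lemma PIpos : (0 : RR) < PI.
Proof. by apply/RltP; exact: PI_RGT_0. Qed.

Lemma Einj u v : 0 <= u <= 2^-1 -> 0 <= v <= 2^-1 -> E u = E v -> u = v.
Proof.
move=> /andP[u0 u1] /andP[v0 v1] [/= hc _].
have hP := PIpos.
have aux w : 0 <= w -> w <= 2^-1 -> (0 <= 2 * PI * w :> RR) && (2 * PI * w <= PI).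
  move=> w0 w1; apply/andP; split; first by rewrite mulr_ge0 // mulr_ge0 // ltW.
  have : 2 * w <= 1 by lra.
  by move=> h2; nra.
have /andP[/RleP u0' /RleP u1'] := aux u u0 u1.
have /andP[/RleP v0' /RleP v1'] := aux v v0 v1.
case: (ltgtP u v) => // huv; exfalso.
- have /RltP h : (2 * PI * u < 2 * PI * v :> RR) by rewrite ltr_pM2l // mulr_gt0.
  move: (cos_decreasing_1 _ _ u0' u1' v0' v1' h) => /RltP; rewrite hc ltxx //.
- have /RltP h : (2 * PI * v < 2 * PI * u :> RR) by rewrite ltr_pM2l // mulr_gt0.
  move: (cos_decreasing_1 _ _ v0' v1' u0' u1' h) => /RltP; rewrite hc ltxx //.
Qed.


Lemma uniq1 (I : finType) (L : I -> int) (c : I -> CC) (h : RR) :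
  0 < h -> (forall t, 0 <= t <= h -> \sum_i c i * E ((L i)%:~R * t) = 0) ->
  forall j, \sum_(i | L i == L j) c i = 0.
Proof.
move=> h0 H j.
pose N : nat := \max_i `|L i|%N.
have hN i : (`|L i| <= N)%N := @leq_bigmax _ (fun i => `|L i|%N) i.
pose K i : nat := absz (L i + N%:Z).
have KE i : (K i)%:Z = L i + N%:Z.
  apply: gez0_abs; have := hN i; lia.
have KR i : (K i)%:R = (L i)%:~R + N%:R :> RR.
  by rewrite -[(K i)%:R]/(((K i)%:Z)%:~R) KE intrD.
pose P : {poly CC} := \sum_i c i *: 'X^(K i).
have Hev t : 0 <= t <= h -> P.[E t] = 0.
  move=> ht; rewrite horner_sum.
  under eq_bigr do rewrite hornerZ hornerXn -E_nat KR mulrDl E_add mulrA.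
  by rewrite -mulr_suml H // mul0r.
pose M := (N.*2).+2.
pose h' := Num.min h 2^-1 / M%:R.
have hM : (0 : RR) < M%:R by rewrite ltr0n.
have h'0 : 0 < h' by rewrite divr_gt0 // lt_min h0 invr_gt0 ltr0n.
have tb k : (k < M)%N -> (0 <= k%:R * h') && (k%:R * h' <= Num.min h 2^-1).
  move=> kM; rewrite mulr_ge0 ?ler0n ?ltW //=.
  have mpos : (0 : RR) < Num.min h 2^-1 by rewrite lt_min h0 invr_gt0 ltr0n.
  apply: (lt_le_trans (y := M%:R * h')).
    by rewrite ltr_pM2r // ltr_nat.
  by rewrite mulrC divfK // gt_eqF.
pose rs := [seq E (k%:R * h') | k <- iota 0 M].
have P0 : P = 0.
  apply/eqP; apply: contraT => Pn0.
  have := max_poly_roots Pn0 _ _.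
  move=> /(_ rs) H1.
  have Hr : all (root P) rs.
    apply/allP => z /mapP [k]; rewrite mem_iota add0n => /andP[_ kM] ->.
    have /andP[t0 t1] := tb k kM.
    rewrite /root Hev // t0 /=; apply: (le_trans t1); by rewrite ge_min lexx.
  have Hu : uniq rs.
    rewrite map_inj_in_uniq ?iota_uniq // => k1 k2.
    rewrite !mem_iota !add0n => /andP[_ k1M] /andP[_ k2M] /Einj.
    have /andP[a0 a1] := tb k1 k1M; have /andP[b0 b1] := tb k2 k2M.
    have m2 : Num.min h 2^-1 <= 2^-1 by rewrite ge_min lexx orbT.
    rewrite a0 b0 (le_trans a1 m2) (le_trans b1 m2) => /(_ isT isT) /eqP.
    by rewrite (inj_eq (mulIf (lt0r_neq0 h'0))) eqr_nat => /eqP.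
  have := H1 Hr Hu; rewrite size_map size_iota ltnNge => /negP H2; exfalso; apply: H2.
  apply: (leq_trans (size_sum _ _ _)); apply/bigmax_leqP => i _.
  apply: (leq_trans (size_scale_leq _ _)); rewrite size_polyXn.
  have := KE i; have := hN i; rewrite /M; lia.
have := congr1 (fun p : {poly CC} => p`_(K j)) P0; rewrite /= coef_sumMXn coef0.
move=> H0; apply: etrans H0; apply: eq_bigl => i /=.
by rewrite -eqz_nat !KE (inj_eq (addIr _)).
Qed.


Lemma digits (M : nat) d (δ : 'I_d -> int) : (forall k, (absz (δ k) < M)%N) ->
  \sum_k δ k * (M ^ (k : nat))%:Z = 0 -> forall k, δ k = 0.
Proof.
elim: d δ => [|d IH] δ hδ.
  by move=> _ [].
rewrite big_ord_recl /= expn0 mulr1.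
set S := \sum_(i < d) _.
have SE : S = M%:Z * \sum_(i < d) δ (lift ord0 i) * (M ^ (i : nat))%:Z.
  rewrite mulr_sumr; apply: eq_bigr => i _.
  by rewrite /bump /= add1n expnS PoszM mulrCA.
move=> h0.
have hS : \sum_(i < d) δ (lift ord0 i) * (M ^ (i : nat))%:Z = 0.
  move: h0; rewrite SE; set T := \sum_(i < d) _ => h0.
  have := hδ ord0; have -> : δ ord0 = - (M%:Z * T) by apply/eqP; rewrite -addr_eq0 h0.
  move=> hh; apply/eqP; apply: contraT => Tn0; move: hh.
  nia.
have h00 : δ ord0 = 0 by move: h0; rewrite SE hS mulr0 addr0.
have IH' := IH (fun i => δ (lift ord0 i)) (fun i => hδ _) hS.
by move=> k; case: (unliftP ord0 k) => [k' ->|->].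
Qed.

Lemma uniqd d (I : finType) (m : I -> 'I_d -> int) (c : I -> CC) (B : nat)
  (hB : forall i k, (absz (m i k) <= B)%N) :
  (forall x, cube x -> \sum_i c i * ephase (m i) x = 0) ->
  forall j, \sum_(i | [forall k, m i k == m j k]) c i = 0.
Proof.
move=> H j.
pose M := (B.*2).+1.
pose L i : int := \sum_k m i k * (M ^ (k : nat))%:Z.
pose h : RR := ((M ^ d)%:R)^-1.
have Mpos : (0 < M ^ d)%N by rewrite expn_gt0.
have h0 : 0 < h by rewrite invr_gt0 ltr0n.
have key : forall t, 0 <= t <= h -> \sum_i c i * E ((L i)%:~R * t) = 0.
  move=> t /andP[t0 th].
  pose x : pt d := fun k => t * (M ^ (k : nat))%:R.
  have cx : cube x.
    move=> k; rewrite /x mulr_ge0 ?ler0n //=.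
    apply: (le_trans (y := h * (M ^ (k : nat))%:R)); first by rewrite ler_wpM2r ?ler0n.
    apply: (le_trans (y := h * (M ^ d)%:R)).
      by rewrite ler_wpM2l ?(ltW h0) // ler_nat leq_pexp2l // ltnW.
    by rewrite /h mulVf // pnatr_eq0 -lt0n.
  apply: etrans (H x cx); apply: eq_bigr => i _; rewrite ephaseE; congr (_ * E _).
  rewrite /L rmorph_sum mulr_suml; apply: eq_bigr => k _.
  rewrite /x rmorphM /=.
  have -> : ((M ^ (k : nat))%:Z)%:~R = (M ^ (k : nat))%:R :> RR by [].
  by rewrite mulrAC mulrA.
have := @uniq1 I L c h h0 key j.
move=> H0; apply: etrans H0; apply: eq_bigl => i /=.
apply/forallP/eqP => [hk|hL].
  by rewrite /L; apply: eq_bigr => k _; rewrite (eqP (hk k)).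
have := @digits M d (fun k => m i k - m j k).
move=> /(_ _ _) hd k; rewrite -subr_eq0; apply/eqP; apply: hd.
  move=> k'; have := hB i k'; have := hB j k'; rewrite /M; lia.
under eq_bigr do rewrite mulrBl.
by rewrite sumrB -/(L i) -/(L j) hL subrr.
Qed.


Definition nr (z : CC) : RR := Num.sqrt (complex.Re z ^+ 2 + complex.Im z ^+ 2).
Lemma normE (z : CC) : `|z| = (nr z)%:C%C.
Proof. exact: normc_def. Qed.
Lemma nr_ge0 z : 0 <= nr z. Proof. exact: sqrtr_ge0. Qed.

Definition halfC : CC := ((2 : RR)^-1)%:C%C.
Definition rho (a : CC) : RR := Num.sqrt (nr a / 2).
Definition U (a : CC) : CC := (rho a)%:C%C.
Definition W (a : CC) : CC := (a^*)%C * (((2 * rho a)^-1 : RR)%:C)%C.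

Lemma sq_term (a e1 e2 e : CC) : e1 * e1^*%C = 1 -> e2 * e2^*%C = 1 ->
  (a != 0 -> e1 * e2^*%C = e) ->
  `|U a * e1 + W a * e2| ^+ 2 = `|a| + (a * e + (a * e)^*%C) * halfC.
Proof.
move=> h1 h2 he.
have [->|a0] := eqVneq a 0.
  have r0 : rho 0 = 0 by rewrite /rho /nr /= expr0n /= addr0 sqrtr0 mul0r sqrtr0.
  by rewrite /W /U r0 (_ : (0:RR)%:C%C = 0) // conjc0 !mul0r !add0r conjc0 mul0r normr0 expr0n addr0.
have e_ := he a0.
have ec : e1^*%C * e2 = e^*%C by rewrite -e_ rmorphM /= conjcK.
set r := nr a; set p := rho a.
have r0 : 0 < r.
  by rewrite lt_def nr_ge0 andbT; apply: contra a0 => /eqP r0; rewrite -normr_eq0 normE -/r r0.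
have p0 : 0 < p by rewrite /p /rho sqrtr_gt0 divr_gt0.
have hr : r = 2 * p ^+ 2. rewrite /p /rho sqr_sqrtr; last by rewrite divr_ge0 ?nr_ge0.
  by rewrite -/r mulrC divfK // pnatr_eq0.
have aa : a * a^*%C = ((r ^+ 2)%:C)%C by rewrite -sqr_normc normE rmorphXn.
rewrite /U /W sqr_normc rmorphD !rmorphM /= conjcK !oppr0 -/p.
rewrite normE.
set c := (2 * p)^-1.
have -> : ((p%:C)%C * e1 + a^*%C * (c%:C)%C * e2) * ((p%:C)%C * e1^*%C + a * (c%:C)%C * e2^*%C)
  = ((p%:C)%C * (p%:C)%C) * (e1 * e1^*%C) + (a * a^*%C) * ((c%:C)%C * (c%:C)%C) * (e2 * e2^*%C)
    + (p%:C)%C * (c%:C)%C * (a * (e1 * e2^*%C) + a^*%C * (e1^*%C * e2)) by ring.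
rewrite h1 h2 e_ ec aa !mulr1 /halfC -!rmorphM -/r.
have p2 : p != 0 by rewrite gt_eqF.
have -> : (p * p)%:C%C + (r ^+ 2 * (c * c))%:C%C = (r%:C)%C.
  rewrite -rmorphD; congr (_%:C)%C; rewrite /c hr; field.
  exact: p2.
have pc : p * c = 2^-1.
  rewrite /c; field.
  exact: p2.
by rewrite pc mulrC.
Qed.

Lemma phase_mul d (w1 w2 w : 'I_d -> int) x : (forall i, w i = w1 i - w2 i) ->
  ephase w1 x * (ephase w2 x)^*%C = ephase w x.
Proof.
move=> hw; rewrite !ephaseE -E_opp -E_add; congr E.
rewrite -sumrN -big_split; apply: eq_bigr => i _ /=.
by rewrite hw intrB mulrBl.
Qed.

Lemma phase_conj d (w : 'I_d -> int) x : ephase w x * (ephase w x)^*%C = 1.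
Proof. by rewrite ephaseE E_conj. Qed.

Lemma ephase0 d x : ephase (fun _ : 'I_d => 0) x = 1.
Proof.
rewrite ephaseE (eq_bigr (fun _ => 0)) ?big1 ?E0 // => i _.
by rewrite mul0r.
Qed.

Lemma sum_delta (T : finType) (t0 : T) (F : T -> CC) :
  \sum_t (t == t0)%:R * F t = F t0.
Proof.
rewrite (bigD1 t0) //= eqxx mul1r big1 ?addr0 // => t /negbTE ->.
by rewrite mul0r.
Qed.

Lemma sos_family d s (T : finType) (q : T -> pt d -> CC) (h : pt d -> RR) :
  (forall k, is_trigpoly s (q k)) ->
  (forall x, cube x -> (h x)%:C%C = \sum_k `|q k x| ^+ 2) -> is_sos s h.
Proof.
move=> hq hh; exists #|T|, (fun j => q (enum_val j)); split.
  by move=> j; exact: hq.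
move=> x cx; rewrite hh //.
have := @big_enum_val _ _ (@GRing.add CC) T (mem T) (fun k => `|q k x| ^+ 2).
by move=> <-; apply: eq_bigl => k; rewrite inE.
Qed.


Lemma omega_bound d n (k : freq d n) i : (absz (omega_of k i) <= n)%N.
Proof. rewrite /omega_of; have := ltn_ord (k i); lia. Qed.
Arguments omega_bound {d n} k i.

Lemma omega_inj d n (k k' : freq d n) :
  [forall i, omega_of k' i == omega_of k i] -> k' = k.
Proof.
move/forallP => h; apply/ffunP => i; apply: val_inj => /=.
have := eqP (h i); rewrite /omega_of; lia.
Qed.

Definition k1 d n s (k : freq d n) : freq d s :=
  [ffun i => inord (if (0 <= omega_of k i) then absz (omega_of k i) else 0%N)].
Definition k2 d n s (k : freq d n) : freq d s :=
  [ffun i => inord (if (0 <= omega_of k i) then 0%N else absz (omega_of k i))].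
Arguments k1 {d n} s k.
Arguments k2 {d n} s k.

Lemma k12 d n s (k : freq d n) : (forall i, absz (omega_of k i) <= s.*2)%N ->
  forall i, omega_of k i = omega_of (k1 s k) i - omega_of (k2 s k) i.
Proof.
move=> hb i; rewrite /omega_of /k1 /k2 !ffunE.
have := hb i; rewrite /omega_of.
case: ifP => h0 hbi; rewrite !inordK; lia.
Qed.

Theorem lemma4p1 (d s : nat) (hd : (1 <= d)%N) (hs : (1 <= s)%N)
  (f : pt d -> RR)
  (hf : is_trigpoly (s.*2) (fun x => (f x)%:C%C))
  (fstar : RR)
  (hmin : forall x, cube x -> fstar <= f x)
  (hatt : exists x, cube x /\ f x = fstar)
  (g : pt d -> RR) (hg : is_sos s g)
  (eps : RR) (heps : Fnorm_le (fun x => f x - fstar - g x) eps) :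
  0 <= fstar - c_star s f <= (s.*2.+1 ^ d)%:R * eps.
Proof.
case: heps => n [a [ha hsum]].
case: hf => b hb.
case: hg => N [q [hq hgq]].
have [p hp] : {p : 'I_N -> freq d s -> CC & forall j x, q j x = trig_sum (p j) x}.
  have hq2 : forall j, exists pj : freq d s -> CC, forall x, q j x = trig_sum pj x := hq.
  exact: boolp.choice hq2.
have hi : forall k, ~~ [forall i, absz (omega_of k i) <= s.*2]%N -> a k = 0.
  move=> k /forallPn [t0 ht0].
  pose cf (i : ((freq d n + freq d s.*2) + (('I_N * (freq d s * freq d s)) + 'I_1))%type) : CC :=
    match i with
    | inl (inl k') => a k'
    | inl (inr k') => - b k'
    | inr (inl u) => p u.1 u.2.1 * (p u.1 u.2.2)^*%C
    | inr (inr _) => (fstar%:C)%C end.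
  pose fr (i : ((freq d n + freq d s.*2) + (('I_N * (freq d s * freq d s)) + 'I_1))%type)
      : 'I_d -> int :=
    match i with
    | inl (inl k') => omega_of k'
    | inl (inr k') => omega_of k'
    | inr (inl u) => fun t => omega_of u.2.1 t - omega_of u.2.2 t
    | inr (inr _) => fun _ => 0 end.
  have hB : forall i t, (absz (fr i t) <= n + s.*2)%N.
    case=> [[k'|k']|[u|u]] t /=.
    - by have := omega_bound k' t; lia.
    - by have := omega_bound k' t; lia.
    - by have := omega_bound u.2.1 t; have := omega_bound u.2.2 t; lia.
    - by [].
  have Hz : forall x, cube x -> \sum_i cf i * ephase (fr i) x = 0.
    move=> x cx; rewrite !big_sumType /=.
    rewrite -[\sum_k' a k' * _]/(trig_sum a x) -ha //.
    under eq_bigr do rewrite mulNr.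
    rewrite sumrN -[\sum_k' b k' * _]/(trig_sum b x) -hb.
    rewrite big_ord1 ephase0 mulr1.
    have Hj : forall j, `|q j x| ^+ 2 = \sum_(pp : (freq d s * freq d s)%type)
        p j pp.1 * (p j pp.2)^*%C * ephase (fun t => omega_of pp.1 t - omega_of pp.2 t) x.
      move=> j; rewrite sqr_normc hp /trig_sum rmorph_sum mulr_suml.
      under eq_bigr do rewrite mulr_sumr.
      rewrite pair_bigA; apply: eq_bigr => pp _ /=.
      rewrite -(@phase_mul d (omega_of pp.1) (omega_of pp.2)
                 (fun t => omega_of pp.1 t - omega_of pp.2 t) x (fun _ => erefl)).
      by rewrite rmorphM mulrACA.
    have S3 : \sum_(u : ('I_N * (freq d s * freq d s))%type) p u.1 u.2.1 * (p u.1 u.2.2)^*%C *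
        ephase (fun t => omega_of u.2.1 t - omega_of u.2.2 t) x = (g x)%:C%C.
      rewrite hgq //; under [RHS]eq_bigr do rewrite Hj.
      by rewrite pair_bigA.
    by rewrite S3 !rmorphB /=; ring.
  have := @uniqd d _ fr cf (n + s.*2) hB Hz (inl (inl k)).
  rewrite !big_sumType /=.
  rewrite (big_pred1 k); last by move=> k'; apply/idP/eqP => [/omega_inj|->] //; apply/forallP => t.
  rewrite big_pred0; last first.
    move=> i; apply/negbTE/forallP => /(_ t0) /eqP heq; move: ht0; rewrite -heq.
    by have := omega_bound i t0; lia.
  rewrite big_pred0; last first.
    move=> i; apply/negbTE/forallP => /(_ t0) /eqP heq; move: ht0; rewrite -heq.
    have := omega_bound i.2.1 t0; have := omega_bound i.2.2 t0.
    move: (omega_of i.2.1 t0) (omega_of i.2.2 t0) => u v; lia.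
  rewrite big_pred0; last first.
    move=> i; apply/negbTE/forallP => /(_ t0) /eqP heq; move: ht0; rewrite -heq.
    by [].
  by rewrite !addr0.
pose sig : RR := \sum_k nr (a k).
have sigC : (sig%:C)%C = \sum_k `|a k|.
  by rewrite /sig rmorph_sum; apply: eq_bigr => k _; rewrite normE.
have sig0 : 0 <= sig by rewrite /sig sumr_ge0 // => k _; exact: nr_ge0.
have sigeps : sig <= eps by rewrite -lecR sigC.
have h3 : forall k x, a k != 0 -> ephase (omega_of (k1 s k)) x *
      (ephase (omega_of (k2 s k)) x)^*%C = ephase (omega_of k) x.
  move=> k x ak.
  case: (boolP [forall i, absz (omega_of k i) <= s.*2]%N) => [hbd|/hi hk]; last first.
    by rewrite hk eqxx in ak.
  by apply: phase_mul => i; apply: k12 => i'; exact: (forallP hbd).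
have c0in : is_sos s (fun x => f x - (fstar - sig)).
  pose Q (i : ('I_N + freq d n)%type) x := match i with
    | inl j => q j x
    | inr k => U (a k) * ephase (omega_of (k1 s k)) x + W (a k) * ephase (omega_of (k2 s k)) x end.
  apply: (@sos_family d s _ Q).
    case=> [j|k] /=; first exact: hq.
    exists (fun t => U (a k) * (t == k1 s k)%:R + W (a k) * (t == k2 s k)%:R) => x.
    have E1 := @sum_delta _ (k1 s k) (fun t => ephase (omega_of t) x).
    have E2 := @sum_delta _ (k2 s k) (fun t => ephase (omega_of t) x).
    rewrite /= in E1 E2; rewrite /Q /trig_sum -E1 -E2 !mulr_sumr -big_split; apply: eq_bigr => t _.
    by rewrite /= mulrDl !mulrA.
  move=> x cx; rewrite big_sumType /= -hgq //.
  under [X in _ = _ + X]eq_bigr => k _ do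
    rewrite (@sq_term (a k) _ _ (ephase (omega_of k) x) (phase_conj _ _ _) (phase_conj _ _ _) (h3 k x)).
  rewrite big_split /= -sigC -mulr_suml big_split /= -rmorph_sum.
  rewrite -[\sum_k a k * _]/(trig_sum a x) -ha // /= oppr0 /halfC.
  rewrite -[((f x - fstar - g x) +i* 0)%C]/(((f x - fstar - g x)%:C)%C).
  rewrite -!rmorphD -rmorphM.
  rewrite [RHS](_ : _ = ((g x + (sig + (f x - fstar - g x + (f x - fstar - g x)) / 2))%:C)%C); last first.
    by rewrite !rmorphD.
  by congr (_%:C)%C; field.
pose SS := [set c : RR | is_sos s (fun x => f x - c)]%classic.
have ub : ubound SS fstar.
  move=> c [M0 [Q0 [_ hQ]]]; case: hatt => x0 [cx0 fx0].
  have := hQ x0 cx0; rewrite -fx0 => h.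
  have : (0 : CC) <= ((f x0 - c)%:C)%C by rewrite h sumr_ge0 // => j _; exact: exprn_ge0.
  by rewrite -[0]/((0:RR)%:C)%C lecR subr_ge0.
have Sne : SS (fstar - sig) := c0in.
have hsup : has_sup SS by split; [exists (fstar - sig) | exists fstar].
have cs1 : c_star s f <= fstar by apply: ge_sup => //; exists (fstar - sig).
have cs2 : fstar - sig <= c_star s f by exact: sup_upper_bound.
have M1 : (1 : RR) <= (s.*2.+1 ^ d)%:R by rewrite ler1n expn_gt0.
apply/andP; split; first by rewrite subr_ge0.
have eps0 : 0 <= eps := le_trans sig0 sigeps.
nra.
Qed.
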